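(* A graph $G$ is well-bicovered with $b(G)=|V(G)|-1$ if and only if there exists an odd cycle $C$ in $G$ such that every odd cycle of $G$ contains every vertex of $C$.
   Context: All graphs are finite and simple; ''subgraph'' means induced subgraph. $b(G)$ denotes the maximum order of an induced bipartite subgraph of $G$. $G$ is well-bicovered if every vertex-inclusion-maximal induced bipartite subgraph of $G$ has the same order. *)

(* Defs.v *)
From mathcomp Require Import all_boot.
Set Implicit Arguments. Unset Strict Implicit. Unset Printing Implicit Defensive.

(* A finite simple graph is a symmetric irreflexive relation e on a finType T. *)

Definition induced_bip (T : finType) (e : rel T) (S : {set T}) : bool :=
  [exists f : {ffun T -> bool},
     [forall x in S, forall y in S, e x y ==> (f x != f y)]].

Definition bip_num (T : finType) (e : rel T) : nat :=
  \max_(S : {set T} | induced_bip e S) #|S|.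

Definition well_bicovered (T : finType) (e : rel T) : Prop :=
  forall S1 S2 : {set T},
    maxset (induced_bip e) S1 -> maxset (induced_bip e) S2 -> #|S1| = #|S2|.

(* An odd cycle: a sequence of pairwise distinct vertices v0..v_{k-1}, k odd, k >= 3,
   with v_i ~ v_{i+1} and v_{k-1} ~ v0. Its vertex set is the set of entries of s. *)
Definition odd_cycle (T : finType) (e : rel T) (s : seq T) : bool :=
  [&& uniq s, 2 < size s, odd (size s) & cycle e s].

(* Main.v *)
Require Import Defs.
From mathcomp Require Import all_boot zify.
From Stdlib Require Import Classical.

Lemma nonuniq_split (T : eqType) (s : seq T) :
  ~~ uniq s -> exists a x t, s = a ++ x :: t /\ x \in t.
Proof.
elim: s => [|y s IH] //= /nandP [/negbNE ys|/IH [a [x [t [-> xt]]]]].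
  by exists [::], y, s.
by exists (y :: a), x, t.
Qed.

Lemma odd_walk_cycle (T : eqType) (r : rel T) : irreflexive r ->
  forall s, cycle r s -> odd (size s) ->
  exists D, [&& uniq D, 2 < size D, odd (size D) & cycle r D] /\ {subset D <= s}.
Proof.
move=> irr s.
elim: {s}(size s).+1 {-2}s (ltnSn (size s)) => // n IH s ltsn cs os.
case us: (uniq s).
  exists s; split => //; rewrite us os cs /=.
  case: s ltsn cs os {us} => [|x [|y [|z s]]] //= _.
  by rewrite irr.
have [a [x [t [sE xt]]]] := nonuniq_split _ _ (negbT us).
case/splitPr: xt sE => b c sE.
have memE : forall y, (y \in s) = (y \in x :: (b ++ x :: c) ++ a).
  by move=> y; rewrite -(mem_rot (size a)) sE rot_size_cat.
have cs' : cycle r (x :: (b ++ x :: (c ++ a))).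
  by move: cs; rewrite -(rot_cycle (size a)) sE rot_size_cat /= -catA.
move: cs'; rewrite /= rcons_cat /= cat_path /= => /andP [pb /andP [lb pc]].
have szE : size s = (size (x :: b) + size (x :: (c ++ a)))%N.
  rewrite sE !size_cat /= !size_cat /=; lia.
move: os; rewrite szE oddD => os.
case ob: (odd (size (x :: b))).
  have [||D [HD sD]] := IH (x :: b) _ _ ob.
  - by move: ltsn; rewrite szE /=; lia.
  - by rewrite /= rcons_path pb lb.
  by exists D; split => // y /sD; rewrite memE !inE !mem_cat !inE => /orP [->|->]; rewrite ?orbT.

rewrite ob /= in os.
have [||D [HD sD]] := IH (x :: (c ++ a)) _ _ os.
- by move: ltsn; rewrite szE /=; lia.
- by [].
exists D; split => // y /sD; rewrite memE !inE !mem_cat !inE.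
by case/or3P => ->; rewrite ?orbT.
Qed.
Set Implicit Arguments. Unset Strict Implicit. Unset Printing Implicit Defensive.

Section Bip.
Variables (T : finType) (e : rel T).
Hypotheses (esym : symmetric e) (eirr : irreflexive e).

Lemma easy_dir (S : {set T}) D : induced_bip e S -> odd_cycle e D ->
  {subset D <= S} -> False.
Proof.
case/existsP => f /forallP Hf /and4P [_ _ oD cD] DS.
have key : forall x p, all (mem S) (x :: p) -> path e x p ->
    f (last x p) = f x (+) odd (size p).
  move=> x p; elim: p x => [|y p IH] x /=; first by rewrite addbF.
  case/and3P => xS yS ap /andP [exy pp].
  rewrite IH /= ?yS //.
  have := Hf x; rewrite xS /= => /forallP /(_ y); rewrite yS exy /=.
  by case: (f x); case: (f y); case: (odd (size p)).
case: D oD cD DS => [|x q] // oD cD DS.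
have := key x (rcons q x).
move: oD => /= oD.
rewrite last_rcons size_rcons /= oD => H.
have : f x = ~~ f x.
  rewrite -addbT; apply: H cD.
  rewrite DS ?inE ?eqxx //=.
  by apply/allP => y; rewrite mem_rcons inE => /orP [/eqP ->|H]; apply: DS; rewrite inE ?eqxx ?H ?orbT.
by case: (f x).
Qed.

Definition eS (S : {set T}) : rel T := fun x y => [&& x \in S, y \in S & e x y].
Definition E2 (S : {set T}) : rel (T * bool) := fun u v => eS S u.1 v.1 && (u.2 != v.2).

Lemma eS_sym S : symmetric (eS S).
Proof. by move=> x y; rewrite /eS esym andbCA andbA. Qed.

Lemma E2_sym S : symmetric (E2 S).
Proof. by move=> u v; rewrite /E2 eS_sym eq_sym. Qed.

Lemma eS_irr S : irreflexive (eS S).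
Proof. by move=> x; rewrite /eS eirr !andbF. Qed.

Lemma E2_parity S u p : path (E2 S) u p -> (last u p).2 = u.2 (+) odd (size p).
Proof.
elim: p u => [|v p IH] u /=; first by rewrite addbF.
case/andP => /andP [_ neq] /IH ->.
by move: neq; case: u.2; case: v.2; case: (odd (size p)).
Qed.

Lemma E2_proj S u p : path (E2 S) u p -> path (eS S) u.1 (map fst p).
Proof.
elim: p u => [|v p IH] u //=.
by case/andP => /andP [-> _] /IH.
Qed.

Lemma cycle_in S D : cycle (eS S) D -> {subset D <= S}.
Proof. by move=> cD y yD; have := next_cycle cD yD; case/andP. Qed.

Lemma odd_closed S x : connect (E2 S) (x, false) (x, true) ->
  exists D, odd_cycle e D /\ {subset D <= S}.
Proof.
case/connectP => p pp lp.
have par := E2_parity pp; rewrite -lp /= in par.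
have pq := E2_proj pp.
have lq : last x (map fst p) = x by rewrite (last_map fst p (x, false)) -lp.
case/lastP: p pp lp par pq lq => [|q z] pp lp par; first by [].
rewrite map_rcons last_rcons => pq zx; rewrite zx in pq.
have cs : cycle (eS S) (x :: map fst q) by [].
have os : odd (size (x :: map fst q)) by rewrite /= size_map; move: par; rewrite size_rcons.
have [D [HD sD]] := @odd_walk_cycle _ _ (@eS_irr S) _ cs os.
exists D; split; last first.
  by move=> y yD; apply: (cycle_in cs); apply: sD.
case/and4P: HD => uD sD2 oD cD; rewrite /odd_cycle uD sD2 oD /=.
by apply: sub_cycle cD => a b /and3P [].
Qed.

Lemma lift_connect S a b : connect (eS S) a b -> forall c, exists d, connect (E2 S) (a, c) (b, d).
Proof.
case/connectP => p pp ->; elim: p a pp => [|v p IH] a /=.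
  by move=> _ c; exists c.
case/andP => av /IH H c.
have [d Hd] := H (~~ c).
exists d; apply: connect_trans Hd; apply: connect1.
by rewrite /E2 /= av; case: c.
Qed.

Lemma hard_dir (S : {set T}) :
  (forall D, odd_cycle e D -> ~ {subset D <= S}) -> induced_bip e S.
Proof.
move=> noD.
have csE := sym_connect_sym (@E2_sym S).
have csS := sym_connect_sym (@eS_sym S).
have noboth : forall r z, connect (E2 S) (r, false) (z, false) ->
    connect (E2 S) (r, false) (z, true) -> False.
  move=> r z c1 c2.
  have c3 : connect (E2 S) (z, false) (z, true).
    by apply: connect_trans c2; rewrite csE.
  by have [D [oD sD]] := odd_closed c3; apply: (noD D).
apply/existsP; exists [ffun x => connect (E2 S) (root (eS S) x, false) (x, true)].
apply/forallP => x; apply/implyP => xS; apply/forallP => y; apply/implyP => yS.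
apply/implyP => exy; rewrite !ffunE.
have eSxy : eS S x y by rewrite /eS xS yS exy.
have -> : root (eS S) y = root (eS S) x.
  by symmetry; apply/(rootP csS); apply: connect1.
set r := root (eS S) x.
have [b Hb] : exists b, connect (E2 S) (r, false) (x, b).
  by apply: lift_connect; rewrite csS connect_root.
have Hy : connect (E2 S) (r, false) (y, ~~ b).
  by apply: connect_trans Hb _; apply: connect1; rewrite /E2 /= eSxy; case: b.
case: b Hb Hy => /= Hb Hy.
  rewrite Hb; apply/negP => /eqP Hy'; exact: noboth Hy (Logic.eq_sym Hy').
have Hx' : connect (E2 S) (r, false) (x, true) = false.
  by apply/negP => Hx'; exact: noboth Hb Hx'.
by rewrite Hx' Hy.
Qed.
End Bip.

Theorem mainTheorem9 (T : finType) (e : rel T)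
  (esym : symmetric e) (eirr : irreflexive e) :
  (well_bicovered e /\ bip_num e + 1 = #|T|) <->
  (exists C : seq T, odd_cycle e C /\
     forall D : seq T, odd_cycle e D -> {subset C <= D}).
Proof.
have cardD1T : forall w : T, #|[set: T] :\ w| = #|T| - 1.
  by move=> w; have := cardsD1 w [set: T]; rewrite in_setT cardsT; lia.
have bip_lt : forall S, induced_bip e S -> ~~ induced_bip e [set: T] -> #|S| < #|T|.
  move=> S bS nT; have := cardsC S; case: (posnP #|~: S|) => [/eqP|] H.
    rewrite cards_eq0 in H; move: bS; rewrite -[S]setCK (eqP H) setC0 => bS.
    by rewrite bS in nT.
  lia.
split.
  case=> WB Hb.
  pose W := [set w | induced_bip e ([set: T] :\ w)].
  have nW : ~~ induced_bip e W.
    apply/negP => bW.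
    have [S mS WS] := maxset_exists bW.
    have [S0 bS0 S0ge] : exists2 S0, induced_bip e S0 & bip_num e <= #|S0|.
      case: (boolP [exists S0 : {set T}, induced_bip e S0 && (bip_num e <= #|S0|)]).
        by case/existsP => S0 /andP [] ; exists S0.
      rewrite negb_exists => /forallP H.
      have H' : bip_num e <= (bip_num e).-1.
        apply/bigmax_leqP => S1 bS1; have := H S1; rewrite bS1 /= -ltnNge.
        by move=> h; lia.
      have b0 : induced_bip e set0.
        by apply/existsP; exists [ffun=> true]; apply/forallP => x; rewrite in_set0.
      have := H set0; rewrite b0 cards0 /=; lia.
    have [S1 mS1 S01] := maxset_exists bS0.
    have le1 : #|S1| <= bip_num e by rewrite /bip_num; apply: (@leq_bigmax_cond _ (induced_bip e) (fun S : {set T} => #|S|) S1); exact: maxsetp mS1.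
    have ge1 : #|S0| <= #|S1| by apply: subset_leq_card.
    have cS : #|S| = (#|T| - 1)%N by rewrite (WB _ _ mS mS1); lia.
    have c1 : #|~: S| == 1 by have := cardsC S; rewrite cS; lia.
    case/cards1P: c1 => w Hw.
    have SE : [set: T] :\ w = S by rewrite setDE setTI -Hw setCK.
    have wW : w \in W by rewrite inE SE (maxsetp mS).
    have := subsetP WS w wW; rewrite -SE !inE eqxx //.
  have [D [oD sD]] : exists D, odd_cycle e D /\ {subset D <= W}.
    apply: NNPP => H; move/negP: nW; apply; apply: hard_dir => // D oD sD.
    by apply: H; exists D.
  exists D; split => // D' oD' x xD.
  have := sD x xD; rewrite inE => bx.
  apply: NNPP => xD'; apply: (easy_dir bx oD') => y yD'.
  by rewrite !inE andbT; apply/eqP => yx; rewrite -yx in xD'.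
case=> C [oC HC].
have bipw : forall w, w \in C -> induced_bip e ([set: T] :\ w).
  move=> w wC; apply: hard_dir => // D oD sD.
  by have := sD w (HC D oD w wC); rewrite !inE eqxx.
have nT : ~~ induced_bip e [set: T].
  by apply/negP => bT; apply: (easy_dir bT oC) => y; rewrite inE.
have bmax : bip_num e = (#|T| - 1)%N.
  apply/eqP; rewrite eqn_leq; apply/andP; split.
    apply/bigmax_leqP => S bS; have := bip_lt S bS nT; lia.
  case: C oC HC bipw => [|v C'] // oC HC bipw.
  rewrite -(cardD1T v) /bip_num.
  apply: (@leq_bigmax_cond _ (induced_bip e) (fun S : {set T} => #|S|)).
  by apply: bipw; rewrite inE eqxx.
split; last first.
  rewrite bmax; case: C oC {HC bipw} => [|v C'] // _.
  have : 0 < #|T| by apply/card_gt0P; exists v.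
  lia.
have cmax : forall S, maxset (induced_bip e) S -> #|S| = (#|T| - 1)%N.
  move=> S mS.
  case: (boolP (all (mem S) C)) => [/allP aC|].
    by have := easy_dir (maxsetp mS) oC aC.
  case/allPn => w wC wS.
  have sub : S \subset [set: T] :\ w.
    by apply/subsetP => y yS; rewrite !inE andbT; apply/eqP => yw; rewrite yw in yS; move/negP: wS.
  by rewrite -(maxsetsup mS (bipw w wC) sub) cardD1T.
by move=> S1 S2 m1 m2; rewrite (cmax _ m1) (cmax _ m2).
Qed.
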